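(* Let $\mathcal{F}$ be a space of functions on $\mathbb{R}$, closed under translations, with a translation-invariant norm $\|\cdot\|$. Suppose that $S_N$ admits the weak global Edgeworth expansion of order $0$ on $\mathcal{F}$ with leading polynomial $P_{0,g}\equiv 1$ and asymptotic mean $A=0$, i.e. $\mathbb{E}(g(S_N))=\int\mathfrak{n}(z)g(z\sqrt{N})\,dz+\|g\|\,o(N^{-1/2})$ for all $g\in\mathcal{F}$, with the $o$-term independent of $g$. Let $f\in\mathcal{F}$ be integrable with $|xf(x)|$ integrable. Then $$\sqrt{N}\,\mathbb{E}(f(S_N-u))=\frac{1}{\sqrt{2\pi\sigma^2}}e^{-\frac{u^2}{2N\sigma^2}}\int f(x)\,dx+o(1)$$ uniformly for $u\in\mathbb{R}$.
   Context: $X_1,X_2,\dots$ are real random variables, $S_N=\sum_{n=1}^N X_n$, $\sigma^2>0$ and $\mathfrak{n}(y)=\frac{1}{\sqrt{2\pi\sigma^2}}e^{-y^2/(2\sigma^2)}$. In this subsection the paper assumes the asymptotic mean $A=\lim_{N\to\infty}\mathbb{E}(S_N/N)$ equals $0$. *)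

(* Defs.v *)
From HB Require Import structures.
From mathcomp Require Import all_boot all_order all_algebra.
From mathcomp Require Import all_classical all_reals all_analysis.
Set Implicit Arguments. Unset Strict Implicit. Unset Printing Implicit Defensive.
Import Order.TTheory GRing.Theory Num.Theory.
Import numFieldNormedType.Exports.
Local Open Scope ring_scope.

Definition ndens (R : realType) (sigma : R) (y : R) : R :=
  (Num.sqrt (2 * pi * sigma ^+ 2))^-1 * expR (- (y ^+ 2) / (2 * sigma ^+ 2)).

Definition psum (T : Type) (R : realType) (X : nat -> T -> R) (N : nat) : T -> R :=
  fun t => \sum_(1 <= n < N.+1) X n t.

(* Main.v *)
Require Import Defs.
From HB Require Import structures.
From mathcomp Require Import all_boot all_order all_algebra.
From mathcomp Require Import all_classical all_reals all_analysis measurable_realfun.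
From mathcomp Require Import ring lra.
Import Order.TTheory GRing.Theory Num.Theory.
Import numFieldNormedType.Exports.
Local Open Scope classical_set_scope.
Local Open Scope ring_scope.
Local Notation mu := (@lebesgue_measure _).
Definition aff {R : realType} (s u : R) (z : R) : R := z * s - u.
Lemma maff {R : realType} (s u : R) :
  measurable_fun (setT : set (measurableTypeR R)) (aff s u : measurableTypeR R -> measurableTypeR R).
Proof. by apply: measurable_funB => //; exact: measurable_funM. Qed.

Definition paff {R : realType} (s u : R) (A : set (measurableTypeR R)) : \bar R :=
  lebesgue_measure (aff s u @^-1` A).

Section paff_measure.
Local Open Scope ereal_scope.
Context {R : realType} (s u : R).
Let mf := maff s u.
Let paff0 : paff s u set0 = 0.
Proof. by rewrite /paff preimage_set0 measure0. Qed.
Let paff_ge0 A : 0 <= paff s u A.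
Proof. by apply: measure_ge0; rewrite -[X in measurable X]setIT; apply: mf. Qed.
Let paff_sigma_additive : semi_sigma_additive (paff s u).
Proof.
move=> F mF tF mUF; rewrite /paff preimage_bigcup.
apply: measure_semi_sigma_additive.
- by move=> n; rewrite -[X in measurable X]setTI; exact: mf.
- apply/trivIsetP => /= i j _ _ ij; rewrite -preimage_setI.
  by move/trivIsetP : tF => /(_ _ _ _ _ ij) ->//; rewrite preimage_set0.
- by rewrite -preimage_bigcup -[X in measurable X]setTI; exact: mf.
Qed.
HB.instance Definition _ := isMeasure.Build _ _ _
  (paff s u) paff0 paff_ge0 paff_sigma_additive.
End paff_measure.

Section S.
Context (R : realType).

Lemma preim_itv (s u a b : R) : 0 < s ->
  aff s u @^-1` `]a, b] = `](a + u) / s, (b + u) / s]%classic.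
Proof.
move=> s0; apply/seteqP; split => z /=; rewrite /aff !in_itv /=.
  by rewrite ltrBrDr lerBlDr ltr_pdivrMr // ler_pdivlMr //.
by rewrite ltrBrDr lerBlDr ltr_pdivrMr // ler_pdivlMr //.
Qed.

Lemma push_scale (s u : R) (s0 : 0 < s) (A : set (measurableTypeR R)) : measurable A ->
  mu A = mscale (NngNum (ltW s0)) (paff s u) A.
Proof.
move=> mA.
move: A mA; apply: lebesgue_measure_unique.
move=> _ [[a b] _ <-] /=.
rewrite /mscale /paff /=. rewrite [X in (_ * mu X)%E]preim_itv //.
rewrite !lebesgue_measure_itv /= !lte_fin ltr_pM2r ?invr_gt0 // ltrD2r.
case: ifPn => ab; last by rewrite mule0.
rewrite -!EFinB -EFinM; congr (_%:E).
by field; rewrite gt_eqF.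
Qed.

Lemma inv_pos {s : R} : 0 < s -> 0 < s^-1.
Proof. by rewrite invr_gt0. Qed.

Lemma paff_scale (s u : R) (s0 : 0 < s) (A : set (measurableTypeR R)) : measurable A ->
  paff s u A = mscale (NngNum (ltW (inv_pos s0))) mu A.
Proof.
move=> mA; rewrite /mscale /= (@push_scale s u s0 A mA) /mscale /=.
by rewrite muleA -EFinM mulVf ?gt_eqF // mul1e.
Qed.

Lemma cv_ge0 (s u : R) (s0 : 0 < s) (G : R -> \bar R) :
  measurable_fun (setT : set (measurableTypeR R)) G -> (forall x, (0 <= G x)%E) ->
  (\int[mu]_z G (aff s u z) = (s^-1)%:E * \int[mu]_x G x)%E.
Proof.
move=> mG G0.
have := @ge0_integral_pushforward _ _ (measurableTypeR R) (measurableTypeR R) R (aff s u) (maff s u) mu setT G measurableT mG (fun x _ => G0 x).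
rewrite preimage_setT => <-.
rewrite (@eq_measure_integral _ _ _ setT (mscale (NngNum (ltW (inv_pos s0))) mu)).
  by rewrite ge0_integral_mscale.
- by move=> mA; apply: (maff s u).
- by move=> ? B mB _; exact: paff_scale.
Qed.

Lemma cv_int (s u : R) (s0 : 0 < s) (H : R -> R) :
  mu.-integrable setT (EFin \o H) ->
  (\int[mu]_z (H (aff s u z))%:E = (s^-1)%:E * \int[mu]_x (H x)%:E)%E.
Proof.
move=> iH; have mH := measurable_int _ iH.
rewrite integralE [in RHS]integralE.
have e1 : (\int[mu]_z ((fun z => (H (aff s u z))%:E)^\+ z) =
   \int[mu]_z (((EFin \o H)^\+ \o aff s u) z))%E.
  by rewrite -funepos_comp.
have e2 : (\int[mu]_z ((fun z => (H (aff s u z))%:E)^\- z) =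
   \int[mu]_z (((EFin \o H)^\- \o aff s u) z))%E.
  by rewrite -funeneg_comp.
rewrite e1 e2 !cv_ge0 //; last 2 first.
- exact: measurable_funeneg.
- exact: measurable_funepos.
rewrite -muleBr //.
apply: fin_num_adde_defl; rewrite fin_numN; exact: integrable_neg_fin_num.
Qed.
End S.
Section L.
Context (R : realType).
Lemma dh (k x : R) : is_derive x 1 (fun y : R => k * y ^+ 2) (k * (2 * x)).
Proof.
apply: is_derive_eq. change (k * (x * 1 + x * 1) = k * (2 * x)). by rewrite mulr1 mulr_natl mulr2n.
Qed.

Lemma dg (k x : R) : is_derive x 1 (fun y : R => expR (k * y ^+ 2)) (expR (k * x ^+ 2) * (k * (2 * x))).
Proof.
have := @is_derive1_comp R expR (fun y : R => k * y ^+ 2) x _ _ (is_derive_expR _) (dh k x).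
by [].
Qed.

Lemma gauss_bound (sig y : R) : 0 < sig ->
  `|y| * expR (- (y ^+ 2 / (2 * sig ^+ 2))) <= sig.
Proof.
move=> s0.
set t := y ^+ 2 / (2 * sig ^+ 2).
have t0 : 0 <= t by rewrite /t divr_ge0 // ?sqr_ge0 // mulr_ge0 // sqr_ge0.
have h1 : y ^+ 2 <= (sig * expR t) ^+ 2.
  rewrite exprMn -expRM_natl.
  apply: le_trans (ler_wpM2l (sqr_ge0 sig) (expR_ge1Dx _)).
  have -> : sig ^+ 2 * (1 + 2 * t) = sig ^+ 2 + y ^+ 2.
    by rewrite /t; field; rewrite gt_eqF // exprn_gt0.
  by rewrite lerDr sqr_ge0.
have h2 : `|y| <= sig * expR t.
  move: h1; rewrite -[y ^+ 2]real_normK ?num_real // ler_sqr //.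
  by rewrite nnegrE mulr_ge0 ?expR_ge0 // ltW.
by rewrite expRN ler_pdivrMr ?expR_gt0.
Qed.

Lemma g_lip (sig a b : R) : 0 < sig ->
  `|expR (- (2 * sig ^+ 2)^-1 * b ^+ 2) - expR (- (2 * sig ^+ 2)^-1 * a ^+ 2)|
   <= sig^-1 * `|b - a|.
Proof.
move=> s0; set k := - (2 * sig ^+ 2)^-1.
wlog ab : a b / a <= b.
  move=> H; case: (leP a b) => [|/ltW ba]; first exact: H.
  by rewrite distrC (distrC b); exact: H.
have cont : {within `[a, b], continuous (fun y : R => expR (k * y ^+ 2))}.
  apply/continuous_subspaceT => x.
  apply: differentiable_continuous; apply/derivable1_diffP. by case: (dg k x).
have [c _ ->] := MVT_segment ab (fun x _ => dg k x) cont.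
rewrite normrM ler_wpM2r //.
have ek : k * c ^+ 2 = - (c ^+ 2 / (2 * sig ^+ 2)) by rewrite /k mulNr mulrC.
have e2 : k * (2 * c) = - (c / sig ^+ 2).
  by rewrite /k; field; rewrite gt_eqF // exprn_gt0.
rewrite ek e2 normrM normrN gtr0_norm ?expR_gt0 // normrM (@gtr0_norm _ (sig ^+ 2)^-1) ?invr_gt0 ?exprn_gt0 //.
rewrite mulrA [expR _ * _]mulrC.
have -> : sig^-1 = sig / sig ^+ 2.
  by field; rewrite gt_eqF.
apply: ler_wpM2r; last exact: gauss_bound.
by rewrite invr_ge0 ltW // exprn_gt0.
Qed.
End L.
Section C.
Context (R : realType).
Lemma cvg_invsqrt : (fun N : nat => (Num.sqrt (N%:R : R))^-1) @ \oo --> (0 : R).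
Proof.
rewrite -cvg_shiftS.
have -> : [sequence (Num.sqrt (n.+1%:R : R))^-1]_n = (Num.sqrt \o @harmonic R).
  by apply/funext => n /=; rewrite sqrtrV.
have := @continuous_cvg _ _ _ _ _ (@harmonic R) (@Num.sqrt R) 0 (@sqrt_continuous R 0) cvg_harmonic.
rewrite sqrtr0; apply; exact: eventually_filter.
Qed.
Lemma cvg_harm : (fun N : nat => (N.+1%:R : R)^-1) @ \oo --> (0 : R).
Proof. exact: cvg_harmonic. Qed.
End C.
Section C.
Context (R : realType).
Lemma mndens (sig : R) : measurable_fun setT (ndens sig).
Proof.
rewrite /ndens.
apply: measurable_funM => //.
apply: measurableT_comp => //.
apply: measurable_funM => //.
apply: measurableT_comp => //.
Qed.
End C.

Section N.
Context (R : realType).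
Lemma ndens_ge0 (sig y : R) : 0 <= ndens sig y.
Proof. by rewrite /ndens mulr_ge0 ?expR_ge0 // invr_ge0 sqrtr_ge0. Qed.

Lemma ndens_le (sig y : R) : ndens sig y <= (Num.sqrt (2 * pi * sig ^+ 2))^-1.
Proof.
rewrite /ndens -[X in _ <= X]mulr1 ler_wpM2l ?invr_ge0 ?sqrtr_ge0 //.
rewrite -expR0 ler_expR mulNr oppr_le0 mulr_ge0 ?sqr_ge0 // invr_ge0 mulr_ge0 // ?sqr_ge0 //.
Qed.

Lemma ndens_lip (sig a b : R) : 0 < sig ->
  `|ndens sig b - ndens sig a| <= (Num.sqrt (2 * pi * sig ^+ 2))^-1 / sig * `|b - a|.
Proof.
move=> s0.
have e y : - (y ^+ 2) / (2 * sig ^+ 2) = - (2 * sig ^+ 2)^-1 * y ^+ 2.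
  by rewrite !mulNr mulrC.
rewrite /ndens !e -mulrBr normrM ger0_norm ?invr_ge0 ?sqrtr_ge0 //.
by rewrite -[X in _ <= X]mulrA ler_wpM2l ?invr_ge0 ?sqrtr_ge0 // g_lip.
Qed.
End N.

Section I.
Context (R : realType).
Local Notation mu := (@lebesgue_measure R).

Lemma intZ (k : R) (f : R -> R) : mu.-integrable setT (EFin \o f) ->
  mu.-integrable setT (EFin \o (fun x => k * f x)).
Proof.
move=> iff; apply: (@eq_integrable _ _ _ mu setT measurableT (fun x => (k%:E * (EFin \o f) x)%E)).
  by move=> x _; rewrite /= EFinM.
exact: integrableZl.
Qed.

Lemma int_bdd (h f : R -> R) (M : R) : measurable_fun setT h ->
  (forall x, `|h x| <= M) -> mu.-integrable setT (EFin \o f) ->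
  mu.-integrable setT (EFin \o (fun x => h x * f x)).
Proof.
move=> mh hM iff.
apply: (@le_integrable _ _ _ mu setT measurableT _ (EFin \o (fun x => M * f x))); last exact: intZ.
  apply/measurable_EFinP; apply: measurable_funM => //.
  by have /measurable_EFinP := measurable_int _ iff.
move=> x _ /=; rewrite lee_fin !normrM.
have M0 : 0 <= M by apply: le_trans (hM x).
by rewrite (ger0_norm M0) ler_wpM2r.
Qed.
End I.
Theorem proposition5p1
  (d : measure_display) (T : measurableType d) (R : realType)
  (P : probability T R) (X : nat -> {RV P >-> R}) (sigma : R)
  (F : set (R -> R)) (nrm : (R -> R) -> R) (f : R -> R) :
  0 < sigma ->
  (* asymptotic mean A = lim E(S_N / N) = 0 (standing assumption) *)
  (forall n, P.-integrable setT (EFin \o X n)) ->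
  (fun N : nat => fine ('E_P[psum X N])%E / N%:R) @ \oo --> (0 : R) ->
  (* F is a linear space of functions on R with a norm *)
  F (fun _ => 0) ->
  (forall g h, F g -> F h -> F (fun x => g x + h x)) ->
  (forall (a : R) g, F g -> F (fun x => a * g x)) ->
  (forall g, F g -> 0 <= nrm g) ->
  (forall (a : R) g, F g -> nrm (fun x => a * g x) = `|a| * nrm g) ->
  (forall g h, F g -> F h -> nrm (fun x => g x + h x) <= nrm g + nrm h) ->
  (* closed under translations, translation-invariant norm *)
  (forall g (u : R), F g -> F (fun x => g (x - u))) ->
  (forall g (u : R), F g -> nrm (fun x => g (x - u)) = nrm g) ->
  (* E(g(S_N)) is well defined for g in F *)
  (forall g N, F g -> P.-integrable setT (EFin \o (g \o psum X N))) ->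
  (* weak global Edgeworth expansion of order 0, P_{0,g} = 1, A = 0 *)
  (exists eps : nat -> R,
     (fun N : nat => Num.sqrt N%:R * eps N) @ \oo --> (0 : R) /\
     forall g N, F g ->
       `| fine ('E_P[g \o psum X N])%E
          - Rintegral lebesgue_measure setT
              (fun z => ndens sigma z * g (z * Num.sqrt N%:R)) |
       <= nrm g * eps N) ->
  (* f in F, f and x f(x) integrable *)
  F f ->
  measurable_fun setT f ->
  lebesgue_measure.-integrable setT (EFin \o f) ->
  lebesgue_measure.-integrable setT (EFin \o (fun x => x * f x)) ->
  (* conclusion, uniformly in u *)
  exists r : nat -> R,
    r @ \oo --> (0 : R) /\
    forall (N : nat) (u : R),
      `| Num.sqrt N%:R * fine ('E_P[fun t => f (psum X N t - u)%R])%E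
         - (Num.sqrt (2 * pi * sigma ^+ 2))^-1
             * expR (- (u ^+ 2) / (2 * N%:R * sigma ^+ 2))
             * Rintegral lebesgue_measure setT f | <= r N.
Proof.
move=> s0 iX EX0 F0 FD FZ nrm0 nrmZ nrmD Ftr nrmtr iG [eps [eps0 edg]] Ff mf iff ixf.
set c := (Num.sqrt (2 * pi * sigma ^+ 2))^-1.
pose I := Rintegral lebesgue_measure setT f.
pose K := Rintegral lebesgue_measure setT (fun x => `|x * f x|).
pose L := c / sigma.
exists (fun N : nat => Num.sqrt N%:R * (nrm f * eps N) + L * K * (Num.sqrt N%:R)^-1
   + `|c * I| * (N.+1%:R)^-1).
split.
  have -> : (0 : R) = nrm f * 0 + L * K * 0 + `|c * I| * 0 by rewrite !mulr0 !addr0.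
  apply: cvgD; first apply: cvgD.
  - under eq_fun do rewrite mulrCA.
    exact: cvgMl_tmp.
  - apply: cvgMl_tmp; exact: cvg_invsqrt.
  - apply: cvgMl_tmp; exact: cvg_harm.
move=> N u.
case: N => [|n].
  rewrite sqrtr0 !mul0r mulr0 mul0r !invr0 !mulr0 expR0 mulr1 sub0r normrN invr1 !mulr1 !add0r.
  by [].
have sp : 0 < Num.sqrt (n.+1%:R : R) by rewrite sqrtr_gt0 ltr0n.
set s := Num.sqrt (n.+1%:R : R) in sp *.
have hE : `|fine 'E_P[fun t => f (psum X n.+1 t - u)]
    - Rintegral lebesgue_measure setT (fun z => ndens sigma z * f (z * s - u))|
    <= nrm f * eps n.+1.
  by have := edg (fun x => f (x - u)) n.+1 (Ftr f u Ff); rewrite nrmtr.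
pose H := fun x => ndens sigma ((x + u) / s) * f x.
have mH1 : measurable_fun (setT : set (measurableTypeR R)) (fun x : R => ndens sigma ((x + u) / s)).
  apply: measurableT_comp; first exact: mndens.
  by apply: measurable_funM => //; apply: measurable_funD.
have iH : lebesgue_measure.-integrable setT (EFin \o H).
  apply: (@int_bdd R _ f c mH1) => // x.
  by rewrite ger0_norm ?ndens_ge0 // ndens_le.
have hIg : Rintegral lebesgue_measure setT (fun z => ndens sigma z * f (z * s - u))
    = s^-1 * Rintegral lebesgue_measure setT H.
  rewrite (@eq_Rintegral _ _ _ lebesgue_measure setT (fun z => H (aff s u z))); last first.
    by move=> z _; rewrite /H /aff subrK mulfK ?gt_eqF.
  rewrite /Rintegral cv_int // fineM //; exact: integrable_fin_num.
set a := ndens sigma (u / s).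
have hJ : `|Rintegral lebesgue_measure setT H - a * I| <= L / s * K.
  have ia := @intZ R a f iff.
  rewrite /I -RintegralZl // -RintegralB //.
  pose h1 := fun x : R => ndens sigma ((x + u) / s) - a.
  have mh1 : measurable_fun (setT : set (measurableTypeR R)) h1.
    by apply: measurable_funB.
  have iD : lebesgue_measure.-integrable setT (EFin \o (fun x => h1 x * f x)).
    apply: (@int_bdd R _ f (c + c) mh1) => // x.
    apply: le_trans (ler_normB _ _) _.
    by apply: lerD; rewrite ger0_norm ?ndens_ge0 // ndens_le.
  rewrite (@eq_Rintegral _ _ _ lebesgue_measure setT (fun x => h1 x * f x)); last first.
    by move=> x _; rewrite /H /h1 mulrBl.
  have iK : lebesgue_measure.-integrable setT (EFin \o (fun x => L / s * `|x * f x|)).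
    exact: (@intZ R (L / s) _ (integrable_norm ixf)).
  apply: le_trans (le_normr_Rintegral _ _) _ => //.
  apply: le_trans (le_Rintegral _ _ iK _) _ => //.
  - exact: integrable_norm.
  - move=> x _; rewrite normrM (normrM x) mulrA ler_wpM2r //.
    rewrite /h1 /a; apply: le_trans (@ndens_lip R sigma _ _ s0) _.
    rewrite -mulrBl addrK normrM (gtr0_norm (@inv_pos R s sp)).
    by rewrite /L mulrA mulrAC.
  by rewrite RintegralZl //; exact: integrable_norm.
have hc : c * expR (- u ^+ 2 / (2 * n.+1%:R * sigma ^+ 2)) = a.
  rewrite /a /ndens; congr (_ * expR _).
  rewrite expr_div_n /s sqr_sqrtr ?ler0n //.
  by field; rewrite ?gt_eqF ?ltr0n ?exprn_gt0.
rewrite hc.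
set E := fine _.
set Ig := Rintegral _ _ _ in hE hIg.
have key : s * E - a * \int[lebesgue_measure]_x f x
    = s * (E - Ig) + (Rintegral lebesgue_measure setT H - a * I).
  by rewrite hIg /I; field; rewrite gt_eqF.
rewrite key; apply: le_trans (ler_normD _ _) _.
rewrite normrM (gtr0_norm sp).
apply: le_trans (lerD (ler_wpM2l (ltW sp) hE) hJ) _.
rewrite -[X in X <= _]addr0; apply: lerD.
  by rewrite /L mulrAC.
by rewrite mulr_ge0 // invr_ge0.
Qed.
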